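(* Let $G$ be a $6$-regular graph, $\mathcal S$ a canonical path partition of $G$, $P$ a path component, and $X=x_1x_2\cdots x_k$ with $k\ge 2$ a sequence of consecutive vertices of $P$, all in $V_2^b$, such that no vertex of $X$ is joined by a free edge to a dangerous vertex. Then $b(X)\le \frac23(k+2)$.
   Context: All graphs are finite, simple and undirected. A path partition of $G=(V,E)$ is a set of vertex-disjoint paths (single vertices allowed) covering $V$; its members are components. A component with $t\ge3$ vertices is a cycle component if the subgraph induced on its vertex set has a spanning cycle; a one-vertex component is an isolated vertex; every other component is a path component. A path partition is canonical if (1) it has the minimum number of components among all path partitions of $G$; (2) among those, it has the maximum number of cycle components; (3) it has no isolated vertices. Given a canonical path partition $\mathcal S$ of $G$: two vertices are path neighbors if they are consecutive on a path component. An edge of $G$ is a free edge unless it joins two path neighbors or has both endpoints in the same cycle component. $V_1$ is the set of end-vertices of path components together with all vertices of cycle components. The remaining vertices are classified by the first applicable rule: $V_2$: joined by a free edge to a vertex of $V_1$; $V_3$: both path neighbors lie in $V_2$; $V_4$: exactly one path neighbor lies in $V_2$; $V_5$: all others. $V_2^b$ is the set of vertices of $V_2$ having at least one path neighbor in $V_2$. A balanced edge is a free edge with one endpoint in $V_1$ and the other in $V_2$. A vertex of $V_2$ is moderate if it is incident to at least two balanced edges, at least one of whose other endpoints is an end-vertex of a path component; it is heavy if it is incident to at least three balanced edges whose other endpoints are end-vertices of path components. A vertex of $V_3$ is dangerous if one of its path neighbors is heavy and the other is moderate. For $Y\subseteq V_2$, $b(Y)$ is the sum, over all balanced edges $xy$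 with $x\in Y$ and $y\in V_1$, of $2/3$ if $y$ is an end-vertex of a path component, $1/|V(C)|$ if $y$ lies in a cycle component $C$ with $|V(C)|\le 6$, and $0$ if $y$ lies in a cycle component with at least $7$ vertices. *)

(* Defs.v *)
From HB Require Import structures.
From mathcomp Require Import all_boot all_order all_algebra.
Set Implicit Arguments. Unset Strict Implicit. Unset Printing Implicit Defensive.
Import Order.TTheory GRing.Theory Num.Theory.

Section PathPartition.
Variables (T : finType) (e : rel T).

Definition gpath (c : seq T) : bool :=
  if c is x :: c' then path e x c' else false.

Definition is_path_partition (S : seq (seq T)) : bool :=
  all gpath S && uniq (flatten S) && [forall v, v \in flatten S].

(* cycle component: >= 3 vertices and the induced subgraph on its vertex set
   has a spanning cycle (some ordering of its vertices is a cycle of e) *)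
Definition is_cycle_comp (c : seq T) : bool :=
  (3 <= size c) && has (cycle e) (permutations c).

Definition ncycles (S : seq (seq T)) : nat := count is_cycle_comp S.

Definition canonical_pp (S : seq (seq T)) : Prop :=
  [/\ is_path_partition S,
      (forall S', is_path_partition S' -> size S <= size S'),
      (forall S', is_path_partition S' -> size S' = size S ->
                  ncycles S' <= ncycles S)
    & all (fun c => 2 <= size c) S].

Variable S : seq (seq T).

Definition consec (c : seq T) (u v : T) : bool :=
  ((u, v) \in zip c (behead c)) || ((v, u) \in zip c (behead c)).

Definition pneigh (u v : T) : bool :=
  has (fun c => ~~ is_cycle_comp c && consec c u v) S.

Definition same_cyc (u v : T) : bool :=
  has (fun c => [&& is_cycle_comp c, u \in c & v \in c]) S.

Definition free_edge (u v : T) : bool :=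
  [&& e u v, ~~ pneigh u v & ~~ same_cyc u v].

Definition endv (v : T) : bool :=
  has (fun c => [&& ~~ is_cycle_comp c, v \in c &
                    (v == head v c) || (v == last v c)]) S.

Definition incyc (v : T) : bool :=
  has (fun c => is_cycle_comp c && (v \in c)) S.

Definition inV1 (v : T) : bool := endv v || incyc v.
Definition inV2 (v : T) : bool :=
  ~~ inV1 v && [exists w, free_edge v w && inV1 w].
Definition inV3 (v : T) : bool :=
  [&& ~~ inV1 v, ~~ inV2 v & [forall w, pneigh v w ==> inV2 w]].
Definition inV4 (v : T) : bool :=
  [&& ~~ inV1 v, ~~ inV2 v, ~~ inV3 v & #|[set w | pneigh v w && inV2 w]| == 1].
Definition inV5 (v : T) : bool :=
  [&& ~~ inV1 v, ~~ inV2 v, ~~ inV3 v & ~~ inV4 v].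
Definition inV2b (v : T) : bool :=
  inV2 v && [exists w, pneigh v w && inV2 w].

Definition balanced (x y : T) : bool :=
  free_edge x y && ((inV1 x && inV2 y) || (inV2 x && inV1 y)).

Definition moderate (v : T) : bool :=
  [&& inV2 v, 2 <= #|[set w | balanced v w]| &
      [exists w, balanced v w && endv w]].
Definition heavy (v : T) : bool :=
  inV2 v && (3 <= #|[set w | balanced v w && endv w]|).
Definition dangerous (v : T) : bool :=
  inV3 v && [exists p, exists q,
    [&& p != q, pneigh v p, pneigh v q, heavy p & moderate q]].

Definition cycsize (v : T) : nat :=
  sumn [seq size c | c <- S & is_cycle_comp c && (v \in c)].

Local Open Scope ring_scope.

Definition bweight (y : T) : rat :=
  if endv y then 2%:R / 3%:R
  else if incyc y && (cycsize y <= 6)%N then (cycsize y)%:R^-1 else 0.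

Definition bval (Y : seq T) : rat :=
  \sum_(x <- Y) \sum_(y | balanced x y && inV1 y) bweight y.

End PathPartition.

(* Main.v *)
Require Import Defs.
From HB Require Import structures.
From mathcomp Require Import all_boot all_order all_algebra.
From mathcomp Require Import zify ring lra.
Set Implicit Arguments. Unset Strict Implicit. Unset Printing Implicit Defensive.
Import Order.TTheory GRing.Theory Num.Theory.

Section Basics.
Variables (T : finType) (e : rel T).
Hypothesis esym : symmetric e.

Lemma gpath_cons x c : gpath e (x :: c) = path e x c.
Proof. by []. Qed.

Lemma gpath_rev c : gpath e (rev c) = gpath e c.
Proof.
case: c => [|x c] //=.
rewrite lastI rev_rcons /= rev_path.
by apply: eq_path => a b; rewrite esym.
Qed.

Lemma gpath_cat x a y b :
  gpath e (x :: a ++ y :: b) = [&& path e x a, e (last x a) y & path e y b].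
Proof. by rewrite /= cat_path /=. Qed.

Lemma gpath_catl a b : a != [::] -> gpath e (a ++ b) -> gpath e a.
Proof. by case: a => // x a _ /=; rewrite cat_path => /andP[]. Qed.

Lemma gpath_catr a b : b != [::] -> gpath e (a ++ b) -> gpath e b.
Proof.
case: b => // y b _; case: a => [//|x a] /=.
by rewrite cat_path /= => /and3P[].
Qed.

Lemma gpath_ne c : gpath e c -> c != [::].
Proof. by case: c. Qed.

Lemma open_cycle r x : cycle e r -> uniq r -> x \in r ->
  exists q, [/\ perm_eq (x :: q) r, gpath e (x :: q) & last x q = prev r x].
Proof.
move=> cr ur /rot_to [i q Hrot].
exists q; split.
- by rewrite -Hrot perm_rot.
- have : cycle e (rot i r) by rewrite rot_cycle.
  by rewrite Hrot /= rcons_path => /andP[].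
- have ur' : uniq (x :: q) by rewrite -Hrot rot_uniq.
  rewrite -(prev_rot i ur) Hrot prev_nth mem_head.
  move: ur' => /= /andP[xq _].
  by rewrite memNindex // -last_nth.
Qed.

End Basics.

Lemma perm_revl (T : eqType) (s : seq T) : perm_eq (rev s) s.
Proof. by apply/permP => p; rewrite count_rev. Qed.

Section Part.
Variables (T : finType) (e : rel T) (S : seq (seq T)).

Lemma uniq_flatten_ne (s : seq (seq T)) :
  all (fun c => c != [::]) s -> uniq (flatten s) -> uniq s.
Proof.
elim: s => //= c s IH /andP[cne alls]; rewrite cat_uniq => /and3P[_ hc us].
rewrite IH // andbT; apply/negP => cs.
case: c cne hc cs => // x c _ hc cs.
have xf : x \in flatten s by apply/flattenP; exists (x :: c) => //; rewrite mem_head.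
by move/hasPn: hc => /(_ x xf); rewrite mem_head.
Qed.

Lemma comp_uniq (s : seq (seq T)) c1 c2 x : uniq (flatten s) ->
  c1 \in s -> c2 \in s -> x \in c1 -> x \in c2 -> c1 = c2.
Proof.
elim: s => //= c s IH; rewrite cat_uniq => /and3P[_ hc us].
have Hx : forall c', c' \in s -> x \in c' -> x \in c -> False.
  move=> c' c's xc' xc.
  have xf : x \in flatten s by apply/flattenP; exists c'.
  by move/hasPn: hc => /(_ x xf); rewrite xc.
rewrite !inE => /orP[/eqP->|h1] /orP[/eqP->|h2] x1 x2 //.
- by case: (Hx _ h2 x2 x1).
- by case: (Hx _ h1 x1 x2).
- exact: IH.
Qed.

Lemma comp_uniq1 (s : seq (seq T)) c : uniq (flatten s) -> c \in s -> uniq c.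
Proof.
move=> us cs; have /perm_flatten pf := perm_to_rem cs.
by move: us; rewrite (perm_uniq pf) /= cat_uniq => /andP[].
Qed.

Lemma pp_uniqS s : is_path_partition e s -> uniq s.
Proof.
rewrite /is_path_partition => /andP[/andP[ga us] _]; apply: uniq_flatten_ne us.
by apply/allP => c /(allP ga); case: c.
Qed.

Lemma pp_flat s : is_path_partition e s -> uniq (flatten s).
Proof. by rewrite /is_path_partition => /andP[/andP[]]. Qed.

Lemma pp_cover s x : is_path_partition e s -> exists2 c, c \in s & x \in c.
Proof.
by rewrite /is_path_partition => /andP[_ /forallP] /(_ x) /flattenP [c cs xc]; exists c.
Qed.

Lemma pp_gpath s c : is_path_partition e s -> c \in s -> gpath e c.
Proof. by rewrite /is_path_partition => /andP[/andP[/allP ga _] _] /ga. Qed.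

Lemma repl A B : is_path_partition e S -> uniq A -> {subset A <= S} ->
  all (gpath e) B -> perm_eq (flatten B) (flatten A) ->
  [/\ is_path_partition e (B ++ [seq c <- S | c \notin A]),
      (size (B ++ [seq c <- S | c \notin A]) + size A = size B + size S)%N &
      (ncycles e (B ++ [seq c <- S | c \notin A]) + ncycles e A
         = ncycles e B + ncycles e S)%N].
Proof.
move=> ppS uA sAS gB pB.
set F := [seq c <- S | c \notin A].
have uS := pp_uniqS ppS.
have pS : perm_eq S (A ++ F).
  have h1 : perm_eq [seq c <- S | c \in A] A.
    apply: uniq_perm; [exact: filter_uniq | exact: uA |].
    by move=> c; rewrite mem_filter; case cA: (c \in A) => //=; rewrite sAS.
  have h2 : perm_eq ([seq c <- S | c \in A] ++ F) (A ++ F) by rewrite perm_cat2r.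
  rewrite perm_sym; apply: (@perm_trans _ ([seq c <- S | c \in A] ++ F)); first by rewrite perm_sym.
  by apply/permPl; exact: (perm_filterC (mem A) S).
have pf : perm_eq (flatten (B ++ F)) (flatten S).
  apply: (@perm_trans _ (flatten (A ++ F))); last by apply: perm_flatten; rewrite perm_sym.
  by rewrite !flatten_cat perm_cat2r.
split.
- move: ppS; rewrite /is_path_partition => /andP[/andP[gS uf] cov].
  apply/andP; split; first (apply/andP; split).
  + rewrite all_cat gB /= /F all_filter; apply/allP => c cS; apply/implyP => _; exact: (allP gS).
  + by rewrite (perm_uniq pf).
  + by apply/forallP => v; rewrite (perm_mem pf); exact: (forallP cov).
- rewrite (perm_size pS) !size_cat -addnA; congr (_ + _); exact: addnC.
- rewrite /ncycles count_cat (elimT permP pS) count_cat -addnA; congr (_ + _); exact: addnC.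
Qed.

Hypothesis canS : canonical_pp e S.

Lemma repl_fewer A B : uniq A -> {subset A <= S} ->
  all (gpath e) B -> perm_eq (flatten B) (flatten A) -> (size B < size A)%N -> False.
Proof.
case: canS => ppS min _ _ uA sAS gB pB lt.
have [pp' sz _] := repl ppS uA sAS gB pB.
have := min _ pp'; lia.
Qed.

Lemma repl_morecyc A B : uniq A -> {subset A <= S} ->
  all (gpath e) B -> perm_eq (flatten B) (flatten A) -> size B = size A ->
  (ncycles e A < ncycles e B)%N -> False.
Proof.
case: canS => ppS _ maxc _ uA sAS gB pB eqs lt.
have [pp' sz nc] := repl ppS uA sAS gB pB.
have := maxc _ pp'; lia.
Qed.

End Part.

Section Comp.
Variables (T : finType) (e : rel T) (S : seq (seq T)).
Hypothesis esym : symmetric e.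
Hypothesis ppS : is_path_partition e S.

Let uf := pp_flat ppS.

Lemma endv_comp y c : c \in S -> y \in c ->
  endv e S y = ~~ is_cycle_comp e c && ((y == head y c) || (y == last y c)).
Proof.
move=> cS yc; apply/hasP/idP.
- case=> c' c'S /and3P[nc yc' h].
  by have ec := comp_uniq uf c'S cS yc' yc; subst c'; rewrite nc h.
- by move=> /andP[nc h]; exists c => //; rewrite nc yc h.
Qed.

Lemma incyc_comp y c : c \in S -> y \in c -> incyc e S y = is_cycle_comp e c.
Proof.
move=> cS yc; apply/hasP/idP.
- case=> c' c'S /andP[cc yc'].
  by have ec := comp_uniq uf c'S cS yc' yc; subst c'.
- by move=> cc; exists c => //; rewrite cc yc.
Qed.

Lemma cyc_span c : is_cycle_comp e c -> exists r, perm_eq r c /\ cycle e r.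
Proof. by case/andP => _ /hasP [r]; rewrite mem_permutations => pr cr; exists r. Qed.

Lemma V1_ends z Q : Q \in S -> ~~ is_cycle_comp e Q -> z \in Q -> inV1 e S z ->
  (z == head z Q) || (z == last z Q).
Proof.
move=> QS nc zQ; rewrite /inV1 (incyc_comp QS zQ) (negbTE nc) orbF.
by rewrite (endv_comp QS zQ) nc.
Qed.

Lemma orient y Q : Q \in S -> y \in Q -> inV1 e S y ->
  exists O, [/\ perm_eq (y :: O) Q, gpath e (y :: O) &
     (~~ is_cycle_comp e Q -> forall z, z \in Q -> inV1 e S z -> z = y \/ z = last y O)].
Proof.
move=> QS yQ y1.
have uQ := comp_uniq1 uf QS.
have gQ := pp_gpath ppS QS.
case cQ: (is_cycle_comp e Q).
  have [r [pr cr]] := cyc_span cQ.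
  have ur : uniq r by rewrite (perm_uniq pr).
  have yr : y \in r by rewrite (perm_mem pr).
  have [q [pq gq _]] := open_cycle cr ur yr.
  by exists q; split => //; apply: perm_trans pq pr.
have nc : ~~ is_cycle_comp e Q by rewrite cQ.
have := V1_ends QS nc yQ y1.
case: Q QS yQ {y1} uQ gQ cQ nc => [//|q0 Q] QS yQ uQ gQ cQ nc /=.
case/orP => [/eqP ->|/eqP ey].
  exists Q; split => // _ z zQ /(V1_ends QS nc zQ) /=.
  by case/orP => /eqP ->; [left|right].
move: QS yQ uQ gQ cQ nc; rewrite lastI -ey => QS yQ uQ gQ cQ nc.
exists (rev (belast q0 Q)); split.
- apply: (@perm_trans _ (rev (rcons (belast q0 Q) y))); first by rewrite rev_rcons.
  by rewrite perm_rev.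
- by move: gQ; rewrite -(gpath_rev esym) rev_rcons.
- move=> _ z zQ /(V1_ends QS nc zQ); rewrite last_rcons.
  case/orP => /eqP ->; last by left.
  right; case: (belast q0 Q) => [|a l] /=; first by [].
  by rewrite rev_cons last_rcons.
Qed.

End Comp.

Section Gen.
Variables (T : finType) (e : rel T) (S : seq (seq T)).
Hypothesis esym : symmetric e.
Hypothesis canS : canonical_pp e S.

Let ppS : is_path_partition e S. Proof. by case: canS. Qed.
Let uf := pp_flat ppS.

Lemma gpath_app R O w : gpath e R -> gpath e (w :: O) -> e (last w R) w ->
  gpath e (R ++ w :: O).
Proof.
case: R => [//|r0 R] /= gR gO eR.
by rewrite cat_path gR /= eR.
Qed.

Lemma cycle_of R w : gpath e R -> head w R = w -> e (last w R) w -> cycle e R.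
Proof.
case: R => [//|r0 R] /= gR hw; subst r0.
by rewrite rcons_path gR => ->.
Qed.

Lemma gen A R B w :
  uniq A -> {subset A <= S} -> all (gpath e) (R :: B) ->
  perm_eq (flatten (R :: B)) (flatten A) -> size (R :: B) = size A ->
  e (last w R) w -> inV1 e S w ->
  [/\ w \in flatten A,
      (forall R', R' \in B -> w != head w R' /\ w != last w R') &
      (ncycles e A = 0%N -> (3 <= size R)%N -> w != head w R)].
Proof.
move=> uA sAS gRB pRB sRB ezw w1.
move: (gRB) => /= /andP[gR gB].
split.
- apply/negP => /negP wA.
  have [Q QS wQ] := pp_cover w ppS.
  have QA : Q \notin A.
    by apply: contra wA => QA; apply/flattenP; exists Q.
  have [O [pO gO _]] := orient esym ppS QS wQ w1.
  apply: (@repl_fewer _ e S canS (Q :: A) ((R ++ w :: O) :: B)).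
  + by rewrite /= QA uA.
  + by move=> c; rewrite inE => /orP[/eqP->|/sAS].
  + by rewrite /= gB gpath_app.
  + rewrite /= -catA; apply: (@perm_trans _ ((w :: O) ++ R ++ flatten B)).
      by rewrite perm_catCA.
    by apply: perm_cat => //.
  + by rewrite /= -sRB.
- have key : forall R' O, R' \in B -> perm_eq O R' -> gpath e O -> head w O = w -> False.
    move=> R' O R'B pO gO hO.
    case: O pO gO hO => [|o0 O] pO gO //= hO; subst o0.
    have pB := perm_to_rem R'B.
    apply: (@repl_fewer _ e S canS A ((R ++ w :: O) :: rem R' B)) => //.
    + rewrite /= gpath_app //; apply/allP => c /mem_rem cB.
      exact: (allP gB).
    + apply: perm_trans pRB; rewrite /= -catA perm_cat2l.
      apply: (@perm_trans _ (flatten (R' :: rem R' B))); last first.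
        by apply: perm_flatten; rewrite perm_sym.
      by apply: perm_cat.
    + have h1 := size_rem R'B; have h2 : (0 < size B)%N by case: (B) R'B.
      by rewrite -sRB /= h1 prednK.
  move=> R' R'B; have gR' : gpath e R' by exact: (allP gB).
  split; apply/negP => /eqP hw.
  + exact: (key R' R' R'B (perm_refl _) gR' (sym_equal hw)).
  +
    apply: (key R' (rev R')) => //; first by rewrite perm_rev.
      by rewrite gpath_rev.
    case: R' R'B gR' hw {key} => [//|r R'] _ _ /= hw.
    by rewrite rev_cons; case/lastP: R' hw => [|l x] /=; rewrite ?last_rcons ?rev_rcons.
- move=> n0 s3; apply/negP => /eqP hw.
  apply: (@repl_morecyc _ e S canS A (R :: B)) => //.
  rewrite n0 /ncycles /= ; suff -> : is_cycle_comp e R by [].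
  rewrite /is_cycle_comp s3 /=; apply/hasP; exists R.
    by rewrite mem_permutations.
  exact: (cycle_of gR (sym_equal hw)).
Qed.

End Gen.

Definition nb (T : finType) (e : rel T) (S : seq (seq T)) x y :=
  free_edge e S x y && inV1 e S y.

Section Pair.
Variables (T : finType) (e : rel T) (S : seq (seq T)).
Hypothesis esy : symmetric e.
Hypothesis canS : canonical_pp e S.
Variables (P Pre Post : seq T) (u v : T).
Hypothesis PS : P \in S.
Hypothesis Pnc : ~~ is_cycle_comp e P.
Hypothesis Pdef : P = Pre ++ u :: v :: Post.
Hypothesis Pre0 : Pre != [::].
Hypothesis Post0 : Post != [::].

Let ppS : is_path_partition e S. Proof. by case: canS. Qed.
Let uf := pp_flat ppS.

Definition sP := head u Pre.
Definition tP := last v Post.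

Lemma headP x : head x P = sP.
Proof. by rewrite Pdef /sP; case: (Pre) Pre0. Qed.

Lemma lastP' x : last x P = tP.
Proof. by rewrite Pdef last_cat /= /tP; case: (Post) Post0. Qed.

Let gP := pp_gpath ppS PS.

Lemma Psplit : P = (Pre ++ [:: u]) ++ v :: Post.
Proof. by rewrite Pdef -catA. Qed.

Lemma gPre : gpath e (Pre ++ [:: u]).
Proof. have := gP; rewrite Psplit; apply: gpath_catl; by case: (Pre). Qed.

Lemma gPost : gpath e (v :: Post).
Proof. by have := gP; rewrite Psplit; apply: gpath_catr. Qed.

Lemma euv : e u v.
Proof.
have [p [Pr EP]] : exists p Pr, Pre = p :: Pr by case: (Pre) Pre0 => // p Pr _; exists p, Pr.
move: gP; rewrite Psplit EP /= cat_path => /andP[_].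
by rewrite last_cat /= => /andP[].
Qed.

Lemma V1inP w : w \in P -> inV1 e S w -> w = sP \/ w = tP.
Proof.
move=> wP w1; have := V1_ends ppS PS Pnc wP w1.
by rewrite headP lastP' => /orP[/eqP->|/eqP->]; [left|right].
Qed.

Lemma consec_mid (X1 X2 : seq T) a b : consec (X1 ++ a :: b :: X2) a b.
Proof.
rewrite /consec; apply/orP; left.
elim: X1 => [|x X1 IH] /=; first by rewrite mem_head.
by case: X1 IH => [|y X1] /= IH; rewrite inE IH orbT.
Qed.

Lemma pneigh_mid (X1 X2 : seq T) a b : P = X1 ++ a :: b :: X2 -> pneigh e S a b.
Proof.
move=> hP; apply/hasP; exists P => //; rewrite Pnc /= hP; exact: consec_mid.
Qed.


Lemma rev_ne (y : T) s : rev (y :: s) = last y s :: rev (belast y s).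
Proof. by rewrite lastI rev_rcons. Qed.

Lemma last_rev_cons (x y : T) s : last x (rev (y :: s)) = y.
Proof. by rewrite rev_cons last_rcons. Qed.

Lemma size_Pre : (0 < size Pre)%N.
Proof. by case: (Pre) Pre0. Qed.

Lemma size_Post : (0 < size Post)%N.
Proof. by case: (Post) Post0. Qed.

Lemma last_Preu x : last x (Pre ++ [:: u]) = u.
Proof. by rewrite last_cat. Qed.

Lemma head_Preu x : head x (Pre ++ [:: u]) = sP.
Proof. by rewrite /sP; case: (Pre) Pre0. Qed.

Lemma nbE x w : nb e S x w -> [/\ e x w, ~~ pneigh e S x w & inV1 e S w].
Proof. by case/andP => /and3P[]. Qed.

Lemma F2a w : e u tP -> nb e S v w -> w = tP.
Proof.
move=> eut /nbE [evw _ w1].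
set R := (Pre ++ [:: u]) ++ rev (v :: Post).
have gR : gpath e R.
  rewrite /R rev_ne; apply: gpath_app; first exact: gPre.
    by rewrite -rev_ne gpath_rev //; exact: gPost.
  by rewrite last_Preu.
have h1 : {subset [:: P] <= S} by move=> c; rewrite inE => /eqP ->.
have h2 : all (gpath e) [:: R] by rewrite /= gR.
have h3 : perm_eq (flatten [:: R]) (flatten [:: P]).
  rewrite /= !cats0 /R Pdef -catA perm_cat2l /= perm_cons.
  exact: perm_revl.
have h4 : e (last w R) w by rewrite /R last_cat last_rev_cons.
have [wA _ c3] := gen esy canS (A := [:: P]) (R := R) (B := [::]) (w := w) (erefl true) h1 h2 h3 (erefl _) h4 w1.
have : w != head w R.
  apply: c3; first by rewrite /ncycles /= (negbTE Pnc).
  have h := size_Pre; rewrite /R size_cat size_rev size_cat.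
  have e2 : size (v :: Post) = (size Post).+1 by [].
  have e1 : size [:: u] = 1%N by [].
  rewrite e1 e2; clear -h; lia.
have hR : head w R = sP by rewrite /R -catA /sP; case: (Pre) Pre0.
rewrite hR.
have wP : w \in P by move: wA; rewrite /= cats0.
by have [->|] := V1inP wP w1; [rewrite eqxx|].
Qed.

Lemma F2b w : e v sP -> nb e S u w -> w = sP.
Proof.
move=> evs /nbE [euw _ w1].
set R := rev (v :: Post) ++ (Pre ++ [:: u]).
have gR : gpath e R.
  rewrite /R; have := gPre; have := head_Preu v.
  case: (Pre ++ [:: u]) => [//|a l] /= ha gal; apply: gpath_app => //.
  - by rewrite gpath_rev //; exact: gPost.
  - by rewrite last_rev_cons ha.
have h1 : {subset [:: P] <= S} by move=> c; rewrite inE => /eqP ->.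
have h2 : all (gpath e) [:: R] by rewrite /= gR.
have h3 : perm_eq (flatten [:: R]) (flatten [:: P]).
  apply/permP => p; rewrite /= !cats0 /R Psplit !count_cat count_rev /=; clear; lia.
have h4 : e (last w R) w by rewrite /R last_cat last_Preu.
have [wA _ c3] := gen esy canS (A := [:: P]) (R := R) (B := [::]) (w := w) (erefl true) h1 h2 h3 (erefl _) h4 w1.
have : w != head w R.
  apply: c3; first by rewrite /ncycles /= (negbTE Pnc).
  have h := size_Post; rewrite /R size_cat size_rev size_cat.
  have e2 : size (v :: Post) = (size Post).+1 by [].
  have e1 : size [:: u] = 1%N by [].
  rewrite e1 e2; clear -h; lia.
rewrite /R /= rev_ne /=.
have wP : w \in P by move: wA; rewrite /= cats0.
have [|->] := V1inP wP w1; first by [].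
by rewrite /tP eqxx.
Qed.


Lemma pneigh_mid_r (X1 X2 : seq T) a b : P = X1 ++ a :: b :: X2 -> pneigh e S b a.
Proof.
move=> hP; apply/hasP; exists P => //; rewrite Pnc /= /consec orbC hP.
exact: consec_mid.
Qed.

Variables (Q O : seq T) (q : T).
Hypothesis QS : Q \in S.
Hypothesis QP : Q != P.
Hypothesis pO : perm_eq (q :: O) Q.
Hypothesis gO : gpath e (q :: O).

Lemma GA w : e u q -> nb e S v w ->
  [/\ w \in P ++ Q, w != last q O, w != sP & (~~ is_cycle_comp e Q -> w != tP)].
Proof.
move=> euq /nbE [evw npn w1].
set R := rev (v :: Post).
set R1 := rev (q :: O) ++ u :: rev Pre.
have gR : gpath e R by rewrite gpath_rev //; exact: gPost.
have gR1 : gpath e R1.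
  rewrite /R1; apply: gpath_app.
  - by rewrite gpath_rev.
  - by rewrite -rev_rcons -cats1 gpath_rev //; exact: gPre.
  - by rewrite last_rev_cons esy.
have h0 : uniq [:: P; Q] by rewrite /= inE eq_sym QP.
have h1 : {subset [:: P; Q] <= S} by move=> c; rewrite !inE => /orP[] /eqP ->.
have h2 : all (gpath e) [:: R; R1] by rewrite /= gR gR1.
have h3 : perm_eq (flatten [:: R; R1]) (flatten [:: P; Q]).
  apply/permP => p; move: (elimT permP pO p).
  rewrite /= !cats0 /R /R1 Pdef !count_cat !count_rev /= ?count_cat ?count_rev /=; move=> hp; clear -hp; lia.
have h4 : e (last w R) w by rewrite /R last_rev_cons.
have [wA hB c3] := gen esy canS (A := [:: P; Q]) (R := R) (B := [:: R1]) (w := w) h0 h1 h2 h3 (erefl _) h4 w1.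
have [hh hl] := hB R1 (mem_head _ _).
split.
- by move: wA; rewrite /= cats0.
- by move: hh; rewrite /R1 rev_ne.
- move: hl; rewrite /R1 last_cat /= /sP.
  by case: (Pre) Pre0 => // a l _; rewrite rev_cons last_rcons.
- move=> nQ; apply/negP => /eqP wt.
  have sz := size_Post.
  case: (ltnP 1 (size Post)) => [s2|s1].
    have : w != head w R.
      apply: c3; first by rewrite /ncycles /= (negbTE Pnc) (negbTE nQ).
      rewrite /R size_rev; have e2 : size (v :: Post) = (size Post).+1 by [].
      by rewrite e2.
    by rewrite /R rev_ne /= wt eqxx.
  move: npn; rewrite wt /tP.
  case: (Post) s1 sz Pdef => [//|t [|//]] _ _ Pd /=.
  by rewrite (pneigh_mid (X1 := Pre ++ [:: u]) (X2 := [::])) // Pd -catA.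
Qed.

Lemma GB w : e v q -> nb e S u w ->
  [/\ w \in P ++ Q, w != last q O, w != tP & (~~ is_cycle_comp e Q -> w != sP)].
Proof.
move=> evq /nbE [euw npn w1].
set R := Pre ++ [:: u].
set R1 := rev (q :: O) ++ v :: Post.
have gR : gpath e R by exact: gPre.
have gR1 : gpath e R1.
  rewrite /R1; apply: gpath_app.
  - by rewrite gpath_rev.
  - exact: gPost.
  - by rewrite last_rev_cons esy.
have h0 : uniq [:: P; Q] by rewrite /= inE eq_sym QP.
have h1 : {subset [:: P; Q] <= S} by move=> c; rewrite !inE => /orP[] /eqP ->.
have h2 : all (gpath e) [:: R; R1] by rewrite /= gR gR1.
have h3 : perm_eq (flatten [:: R; R1]) (flatten [:: P; Q]).
  apply/permP => p; move: (elimT permP pO p).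
  rewrite /= !cats0 /R /R1 Pdef !count_cat !count_rev /= ?count_cat ?count_rev /=; move=> hp; clear -hp; lia.
have h4 : e (last w R) w by rewrite /R last_Preu.
have [wA hB c3] := gen esy canS (A := [:: P; Q]) (R := R) (B := [:: R1]) (w := w) h0 h1 h2 h3 (erefl _) h4 w1.
have [hh hl] := hB R1 (mem_head _ _).
split.
- by move: wA; rewrite /= cats0.
- by move: hh; rewrite /R1 rev_ne.
- by move: hl; rewrite /R1 last_cat /=.
- move=> nQ; apply/negP => /eqP ws.
  have sz := size_Pre.
  case: (ltnP 1 (size Pre)) => [s2|s1].
    have : w != head w R.
      apply: c3; first by rewrite /ncycles /= (negbTE Pnc) (negbTE nQ).
      rewrite /R size_cat; have e1 : size [:: u] = 1%N by [].
      by rewrite e1 addn1.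
    by rewrite /R head_Preu ws eqxx.
  move: npn; rewrite ws /sP.
  case: (Pre) s1 sz Pdef => [//|s0 [|//]] _ _ Pd /=.
  by rewrite (pneigh_mid_r (X1 := [::]) (X2 := v :: Post)) // Pd.
Qed.

End Pair.

Section Abstract.
Local Open Scope ring_scope.
Variables (T : eqType) (sig tau : T -> bool) (W b : T -> rat).

Definition Rc (x y : T) : bool :=
  [&& tau x ==> [&& tau y, ~~ sig y & W y == 0],
      sig y ==> [&& sig x, ~~ tau x & W x == 0] &
      (0 < W x) ==> (0 < W y) ==> (W x + W y <= 1)].

Definition Vok (x : T) : bool :=
  [&& b x == 2%:R / 3%:R * (sig x)%:R + 2%:R / 3%:R * (tau x)%:R + W x,
      0 <= W x & 3%:R * W x + (sig x)%:R + (tau x)%:R <= 4%:R].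

Definition Jinv (x : T) (G : rat) : Prop :=
  [/\ sig x -> ~~ tau x -> W x = 0 -> G = 0,
      tau x -> G <= 4%:R / 3%:R &
      ~~ tau x -> G <= 1%:R / 3%:R + W x /\ G <= 1].

Ltac fin := first [ match goal with H : is_true false |- _ => discriminate H end
                   | match goal with H : is_true (~~ true) |- _ => discriminate H end
                   | lra | (split; lra) | (apply/eqP; rewrite eq_le; apply/andP; split; lra) ].

Lemma Jinv_base x : Vok x -> Jinv x (b x - 2%:R / 3%:R).
Proof.
case/and3P => /eqP -> W0 Wb; move: Wb.
rewrite /Jinv; by case: (sig x); case: (tau x) => /= Wb; split; intros; fin.
Qed.

Lemma Jinv_step x y G : Vok x -> Vok y -> Rc x y -> Jinv x G ->
  Jinv y (G + (b y - 2%:R / 3%:R)).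
Proof.
case/and3P => _ Wx0 Wxb.
case/and3P => /eqP -> Wy0 Wyb /and3P[h1 h2 h3] [j1 j2 j3]; rewrite /Jinv.
case tx: (tau x) in h1 j2 j3 h2 Wxb.
  move: h1 => /= /and3P[ty sy /eqP wy].
  have j := j2 isT.
  rewrite (negbTE sy) ty wy /=; split; intros; fin.
case sy: (sig y) in h2 Wyb *.
  move: h2 => /= /andP[sx /eqP wx].
  have G0 := j1 sx (negbT tx) wx.
  move: Wyb; case ty: (tau y) => /= Wyb; rewrite G0; split; intros; fin.
have [j3a j3b] := j3 isT.
have [wx|wx] := eqVneq (W x) 0; have [wy|wy] := eqVneq (W y) 0.
- move: Wyb; case ty: (tau y) => /= Wyb; split; intros; fin.
- move: Wyb; case ty: (tau y) => /= Wyb; split; intros; fin.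
- move: Wyb; case ty: (tau y) => /= Wyb; split; intros; fin.
- have wxp : 0 < W x by rewrite lt_def wx Wx0.
  have wyp : 0 < W y by rewrite lt_def wy Wy0.
  move: h3; rewrite wxp wyp /= => h3.
  move: Wyb; case ty: (tau y) => /= Wyb; split; intros; fin.
Qed.

Lemma abstract_bound x0 X : all Vok (x0 :: X) -> path Rc x0 X ->
  \sum_(x <- x0 :: X) b x <= 2%:R / 3%:R * (size X).+1%:R + 4%:R / 3%:R.
Proof.
move=> aV pX.
suff : Jinv (last x0 X) (\sum_(x <- x0 :: X) (b x - 2%:R / 3%:R)).
  have hs : forall s : seq T, \sum_(x <- s) (b x - 2%:R / 3%:R) =
      \sum_(x <- s) b x - 2%:R / 3%:R * (size s)%:R.
    elim=> [|z s IH]; first by rewrite !big_nil mulr0 subr0.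
    rewrite !big_cons IH /= mulrS; lra.
  rewrite hs; case=> _ j2 j3.
  have e1 : size (x0 :: X) = (size X).+1 by [].
  rewrite e1 in j2 j3.
  case: (tau (last x0 X)) in j2 j3.
    by have := j2 isT; lra.
  by have [_ h] := j3 isT; lra.
move: aV pX; elim/last_ind: X => [|X y IH].
  by rewrite /= big_seq1 andbT => Vx _; exact: Jinv_base.
rewrite -rcons_cons all_rcons rcons_path => /andP[Vy aV] /andP[pX Rxy].
rewrite big_rcons last_rcons /=.
apply: Jinv_step => //; last exact: IH.
- move/allP: aV => aV; apply: aV; exact: mem_last.
- exact: Rxy.
Qed.

End Abstract.

Lemma gpath_mid (T : finType) (e : rel T) (X1 X2 : seq T) a b :
  gpath e (X1 ++ a :: b :: X2) -> e a b.
Proof.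
case: X1 => [|y X1] /=; first by case/andP.
by rewrite cat_path => /andP[_] /= /and3P[_ ->].
Qed.

Lemma split_mem (T : eqType) (s : seq T) x : x \in s -> exists p1 p2, s = p1 ++ x :: p2.
Proof. by case/splitPr => p1 p2; exists p1, p2. Qed.

Section Main.
Variables (T : finType) (e : rel T) (S : seq (seq T)).
Hypothesis esy : symmetric e.
Hypothesis canS : canonical_pp e S.
Variables (P : seq T) (z0 : T).
Hypothesis PS : P \in S.
Hypothesis Pnc : ~~ is_cycle_comp e P.

Let ppS : is_path_partition e S. Proof. by case: canS. Qed.
Let uf := pp_flat ppS.
Let uP : uniq P := comp_uniq1 uf PS.
Let gP := pp_gpath ppS PS.

Definition sG := head z0 P.
Definition tG := last z0 P.

Definition pctx u v Pre Post := [/\ P = Pre ++ u :: v :: Post, Pre != [::] & Post != [::]].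

Lemma sP_eq u v Pre Post : pctx u v Pre Post -> sP Pre u = sG.
Proof. by case=> hP h0 h1; rewrite /sG (headP hP h0). Qed.

Lemma tP_eq u v Pre Post : pctx u v Pre Post -> tP Post v = tG.
Proof. by case=> hP h0 h1; rewrite /tG (lastP' hP h1). Qed.

Lemma nbE' x w : nb e S x w -> [/\ e x w, ~~ pneigh e S x w & inV1 e S w].
Proof. by case/andP => /and3P[]. Qed.

Lemma wTA u v Pre Post w : pctx u v Pre Post -> nb e S u tG -> nb e S v w -> w = tG.
Proof.
move=> c; have [hP h0 h1] := c; move=> /nbE' [eut _ _].
rewrite -(tP_eq c); apply: (@F2a _ e S esy canS P Pre Post u v PS Pnc hP h0 h1).
by rewrite (tP_eq c).
Qed.

Lemma wSB u v Pre Post w : pctx u v Pre Post -> nb e S v sG -> nb e S u w -> w = sG.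
Proof.
move=> c; have [hP h0 h1] := c; move=> /nbE' [evs _ _].
rewrite -(sP_eq c); apply: (@F2b _ e S esy canS P Pre Post u v PS Pnc hP h0 h1).
by rewrite (sP_eq c).
Qed.

Lemma V1inP' w : w \in P -> inV1 e S w -> w = sG \/ w = tG.
Proof.
move=> wP w1; have := V1_ends ppS PS Pnc wP w1.
have Pne : P != [::] by case: (P) wP.
rewrite /sG /tG; case: (P) Pne => // a l _.
by case/orP => /eqP ->; [left|right].
Qed.

Lemma wOA u v Pre Post a w : pctx u v Pre Post -> nb e S u a -> a \notin P ->
  ~~ incyc e S a -> nb e S v w -> w = a.
Proof.
move=> c; have [hP h0 h1] := c; move=> nua aP na nvw.
have [eua _ a1] := nbE' nua.
have [_ _ w1] := nbE' nvw.
have [Q QS aQ] := pp_cover a ppS.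
have QP : Q != P by apply: contraNneq aP => <-.
have nQ : ~~ is_cycle_comp e Q by rewrite -(incyc_comp ppS QS aQ).
have [O [pO gO hO]] := orient esy ppS QS aQ a1.
have [wPQ wl ws wt] := @GA _ e S esy canS P Pre Post u v PS Pnc hP h0 h1 Q O a QS QP pO gO w eua nvw.
have wt' := wt nQ.
rewrite mem_cat in wPQ; case/orP: wPQ => [wP|wQ].
  by case: (V1inP' wP w1) => ew; [move: ws | move: wt'];
     rewrite ew ?(sP_eq c) ?(tP_eq c) eqxx.
by case: (hO nQ w wQ w1) => // ew; move: wl; rewrite ew eqxx.
Qed.

Lemma wOB u v Pre Post a w : pctx u v Pre Post -> nb e S v a -> a \notin P ->
  ~~ incyc e S a -> nb e S u w -> w = a.
Proof.
move=> c; have [hP h0 h1] := c; move=> nva aP na nuw.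
have [eva _ a1] := nbE' nva.
have [_ _ w1] := nbE' nuw.
have [Q QS aQ] := pp_cover a ppS.
have QP : Q != P by apply: contraNneq aP => <-.
have nQ : ~~ is_cycle_comp e Q by rewrite -(incyc_comp ppS QS aQ).
have [O [pO gO hO]] := orient esy ppS QS aQ a1.
have [wPQ wl wt ws] := @GB _ e S esy canS P Pre Post u v PS Pnc hP h0 Q O a QS QP pO gO w eva nuw.
have ws' := ws nQ.
rewrite mem_cat in wPQ; case/orP: wPQ => [wP|wQ].
  by case: (V1inP' wP w1) => ew; [move: ws' | move: wt];
     rewrite ew ?(sP_eq c) ?(tP_eq c) eqxx.
by case: (hO nQ w wQ w1) => // ew; move: wl; rewrite ew eqxx.
Qed.

Lemma rev_cycle_sym r : cycle e r -> cycle e (rev r).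
Proof. by rewrite rev_cycle (@eq_cycle _ _ e (fun x y => esy y x)). Qed.


Lemma wCA u v Pre Post c C r w : pctx u v Pre Post -> nb e S u c ->
  C \in S -> c \in C -> is_cycle_comp e C -> perm_eq r C -> cycle e r -> nb e S v w ->
  [/\ w != sG, (w \in P -> w = tG), (w \notin P -> w \in C), w != prev r c & w != next r c].
Proof.
move=> cx; have [hP h0 h1] := cx; move=> nuc CS cC cycC pr cr nvw.
have [euc _ c1] := nbE' nuc.
have [_ _ w1] := nbE' nvw.
have CP : C != P by apply/eqP => eCP; move: Pnc; rewrite -eCP cycC.
have uC := comp_uniq1 uf CS.
have ur : uniq r by rewrite (perm_uniq pr).
have cr' : c \in r by rewrite (perm_mem pr).
have [q1 [pq1 gq1 lq1]] := open_cycle cr ur cr'.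
have pq1' : perm_eq (c :: q1) C := perm_trans pq1 pr.
have [wPC1 wl1 ws1 _] := @GA _ e S esy canS P Pre Post u v PS Pnc hP h0 h1 C q1 c CS CP pq1' gq1 w euc nvw.
have crv : cycle e (rev r) := rev_cycle_sym cr.
have urv : uniq (rev r) by rewrite rev_uniq.
have crv' : c \in rev r by rewrite mem_rev.
have [q2 [pq2 gq2 lq2]] := open_cycle crv urv crv'.
have pq2' : perm_eq (c :: q2) C := perm_trans pq2 (perm_trans (perm_revl r) pr).
have [_ wl2 _ _] := @GA _ e S esy canS P Pre Post u v PS Pnc hP h0 h1 C q2 c CS CP pq2' gq2 w euc nvw.
split.
- by rewrite -(sP_eq cx).
- move=> wP; case: (V1inP' wP w1) => // ew; move: ws1; rewrite ew (sP_eq cx) eqxx //.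
- by move=> wP; move: wPC1; rewrite mem_cat (negbTE wP).
- by rewrite -lq1.
- by rewrite -(prev_rev ur) -lq2.
Qed.

Lemma wCB u v Pre Post c C r w : pctx u v Pre Post -> nb e S v c ->
  C \in S -> c \in C -> is_cycle_comp e C -> perm_eq r C -> cycle e r -> nb e S u w ->
  [/\ w != tG, (w \in P -> w = sG), (w \notin P -> w \in C), w != prev r c & w != next r c].
Proof.
move=> cx; have [hP h0 h1] := cx; move=> nvc CS cC cycC pr cr nuw.
have [evc _ c1] := nbE' nvc.
have [_ _ w1] := nbE' nuw.
have CP : C != P by apply/eqP => eCP; move: Pnc; rewrite -eCP cycC.
have uC := comp_uniq1 uf CS.
have ur : uniq r by rewrite (perm_uniq pr).
have cr' : c \in r by rewrite (perm_mem pr).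
have [q1 [pq1 gq1 lq1]] := open_cycle cr ur cr'.
have pq1' : perm_eq (c :: q1) C := perm_trans pq1 pr.
have [wPC1 wl1 wt1 _] := @GB _ e S esy canS P Pre Post u v PS Pnc hP h0 C q1 c CS CP pq1' gq1 w evc nuw.
have crv : cycle e (rev r) := rev_cycle_sym cr.
have urv : uniq (rev r) by rewrite rev_uniq.
have crv' : c \in rev r by rewrite mem_rev.
have [q2 [pq2 gq2 lq2]] := open_cycle crv urv crv'.
have pq2' : perm_eq (c :: q2) C := perm_trans pq2 (perm_trans (perm_revl r) pr).
have [_ wl2 _ _] := @GB _ e S esy canS P Pre Post u v PS Pnc hP h0 C q2 c CS CP pq2' gq2 w evc nuw.
split.
- by rewrite -(tP_eq cx).
- move=> wP; case: (V1inP' wP w1) => // ew; move: wt1; rewrite ew (tP_eq cx) eqxx //.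
- by move=> wP; move: wPC1; rewrite mem_cat (negbTE wP).
- by rewrite -lq1.
- by rewrite -(prev_rev ur) -lq2.
Qed.

Lemma interior x : x \in P -> inV2 e S x -> exists p1 a b p2, P = p1 ++ a :: x :: b :: p2.
Proof.
move=> xP /andP[n1 _].
have nend : ~~ endv e S x by apply: contra n1 => h; rewrite /inV1 h.
rewrite (endv_comp ppS PS xP) Pnc /= negb_or in nend; case/andP: nend => nh nl.
have [p1 [p2 eP]] := split_mem xP.
rewrite eP in nh nl.
case/lastP: p1 eP nh nl => [|p1 a] eP nh nl; first by rewrite /= eqxx in nh.
case: p2 eP nh nl => [|b p2] eP nh nl; first by rewrite last_cat /= eqxx in nl.
by exists p1, a, b, p2; rewrite eP cat_rcons.
Qed.

Hypothesis reg : forall v : T, #|[set w | e v w]| = 6%N.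

Lemma deg4 x : x \in P -> inV2 e S x -> (#|[set y | nb e S x y]| <= 4)%N.
Proof.
move=> xP x2; have [p1 [a [b [p2 eP]]]] := interior xP x2.
set E := [set w | e x w].
have pa : pneigh e S x a by apply: (@pneigh_mid_r _ e S P PS Pnc p1 (b :: p2) a x).
have pb : pneigh e S x b.
  by apply: (@pneigh_mid _ e S P PS Pnc (rcons p1 a) p2 x b); rewrite eP cat_rcons.
have eax : e x a by have := gP; rewrite eP => /gpath_mid; rewrite esy.
have exb : e x b by have := gP; rewrite eP -cat_rcons => /gpath_mid.
have ab : a != b.
  apply/eqP => eab; move: uP; rewrite eP cat_uniq => /and3P[_ _] /=.
  by rewrite !inE eab eqxx orbT.
have aE : a \in E by rewrite inE.
have bE : b \in E :\ a by rewrite !inE (eq_sym b) ab exb.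
have sub : [set y | nb e S x y] \subset E :\ a :\ b.
  apply/subsetP => y; rewrite !inE => /andP[/and3P[exy npn _] _].
  rewrite exy andbT; apply/andP; split.
    by apply/eqP => eyb; move: npn; rewrite eyb pb.
  by apply/eqP => eya; move: npn; rewrite eya pa.
have := subset_leq_card sub.
have c1 := cardsD1 a E; have c2 := cardsD1 b (E :\ a).
rewrite aE /E reg in c1; rewrite bE in c2.
move=> h; apply: leq_trans h _; move: c1 c2; rewrite /E /=; clear; lia.
Qed.

Lemma nonempty x : inV2 e S x -> exists w, nb e S x w.
Proof. by case/andP => _ /existsP [w h]; exists w. Qed.

Lemma balE x y : inV2 e S x -> (balanced e S x y && inV1 e S y) = nb e S x y.
Proof.
move=> x2; rewrite /balanced /nb; case: (inV1 e S y); rewrite ?andbF ?andbT //.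
by rewrite x2 orbT andbT.
Qed.

Lemma cycsize_eq y C : C \in S -> y \in C -> is_cycle_comp e C -> cycsize e S y = size C.
Proof.
move=> CS yC cC.
have hF : [seq c <- S | is_cycle_comp e c && (y \in c)] = [:: C].
  have uF := filter_uniq [pred c | is_cycle_comp e c && (y \in c)] (pp_uniqS ppS).
  have mF : forall c, c \in [seq c <- S | is_cycle_comp e c && (y \in c)] -> c = C.
    move=> c; rewrite mem_filter => /andP[/andP[_ yc] cS]; exact: (comp_uniq uf cS CS yc yC).
  have CF : C \in [seq c <- S | is_cycle_comp e c && (y \in c)] by rewrite mem_filter cC yC CS.
  move: uF mF CF; case: [seq c <- S | _] => [//|c0 [|c1 F']] uF mF CF.
    by rewrite (mF c0 (mem_head _ _)).
  have e0 := mF c0 (mem_head _ _).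
  have e1 : c1 = C by apply: mF; rewrite !inE eqxx orbT.
  by move: uF; rewrite /= e0 e1 inE eqxx.
by rewrite /cycsize hF /= addn0.
Qed.

Local Open Scope ring_scope.

Lemma bw_cyc y C : C \in S -> y \in C -> is_cycle_comp e C ->
  bweight e S y = if (size C <= 6)%N then (size C)%:R^-1 else 0.
Proof.
move=> CS yC cC; rewrite /bweight (endv_comp ppS CS yC) cC /=.
by rewrite (incyc_comp ppS CS yC) cC /= (cycsize_eq CS yC cC).
Qed.

Lemma bw_ge0 y : 0 <= bweight e S y.
Proof.
rewrite /bweight; case: ifP => _; first exact: divr_ge0 (ler0n _ _) (ler0n _ _).
by case: ifP => _; [rewrite invr_ge0 ler0n | exact: lexx].
Qed.

Lemma bw_cyc_le y : incyc e S y -> 3%:R * bweight e S y <= 1.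
Proof.
move=> iy; have [C CS yC] := pp_cover y ppS.
have cC : is_cycle_comp e C by rewrite -(incyc_comp ppS CS yC).
have s3 : (3 <= size C)%N by case/andP: cC.
rewrite (bw_cyc CS yC cC); case: ifP => _; last by rewrite mulr0 ler01.
rewrite ler_pdivrMr ?ltr0n; last by apply: leq_trans s3.
by rewrite mul1r ler_nat.
Qed.

Lemma bw_end y : endv e S y -> bweight e S y = 2%:R / 3%:R.
Proof. by rewrite /bweight => ->. Qed.

Lemma Pne : P != [::].
Proof. by case: (P) gP. Qed.

Lemma sG_in : sG \in P.
Proof. by rewrite /sG; case: (P) Pne => // a l _; rewrite mem_head. Qed.

Lemma tG_in : tG \in P.
Proof. rewrite /tG; case: (P) Pne => // a l _; exact: (seq.mem_last a l). Qed.

Lemma end_sG : endv e S sG.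
Proof.
rewrite (endv_comp ppS PS sG_in) Pnc /= /sG.
by case: (P) Pne => // a l _; rewrite eqxx.
Qed.

Lemma end_tG : endv e S tG.
Proof.
rewrite (endv_comp ppS PS tG_in) Pnc /= /tG.
by case: (P) Pne => // a l _; rewrite eqxx orbT.
Qed.

Lemma sG_tG : (1 < size P)%N -> sG != tG.
Proof.
rewrite /sG /tG; move: uP; case: (P) => [//|a [//|b l]] /= /andP[al _] _.
apply/eqP => eab; move: al; rewrite eab.
by rewrite (seq.mem_last b l).
Qed.

End Main.

Lemma path_pairs (A : Type) (R : rel A) x0 s :
  (forall X1 X2 u v, x0 :: s = X1 ++ u :: v :: X2 -> R u v) -> path R x0 s.
Proof.
elim: s x0 => [//|y s IH] x0 H /=; apply/andP; split.
  by apply: (H [::] s).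
by apply: IH => X1 X2 u v E; apply: (H (x0 :: X1) X2); rewrite E.
Qed.

Lemma path_eq_all (A : eqType) (f : A -> bool) x0 s :
  path (fun a b => f a == f b) x0 s -> forall z, z \in x0 :: s -> f z = f x0.
Proof.
elim: s x0 => [|y s IH] x0 /=; first by move=> _ z; rewrite inE => /eqP ->.
case/andP => /eqP exy ps z; rewrite inE => /orP[/eqP -> //|zs].
by rewrite (IH y ps z zs) exy.
Qed.

Section Main2.
Variables (T : finType) (e : rel T) (S : seq (seq T)).
Hypothesis esy : symmetric e.
Hypothesis canS : canonical_pp e S.
Hypothesis reg : forall v : T, #|[set w | e v w]| = 6%N.
Variables (P : seq T) (z0 : T).
Hypothesis PS : P \in S.
Hypothesis Pnc : ~~ is_cycle_comp e P.

Let ppS : is_path_partition e S. Proof. by case: canS. Qed.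
Let uf := pp_flat ppS.

Local Notation s := (sG P z0).
Local Notation t := (tG P z0).

Lemma mk_ctx L M X1 X2 u v : P = L ++ (X1 ++ u :: v :: X2) ++ M ->
  inV2 e S u -> inV2 e S v -> pctx P u v (L ++ X1) (X2 ++ M).
Proof.
move=> hP0 /andP[u1 _] /andP[v1 _].
have hP : P = (L ++ X1) ++ u :: v :: (X2 ++ M) by rewrite hP0 -!catA.
split.
- exact: hP.
- apply/eqP => E; move/negP: u1; apply; rewrite /inV1; apply/orP; left.
  have -> : u = s by rewrite /sG hP E.
  exact: (end_sG canS z0 PS Pnc).
- apply/eqP => E; move/negP: v1; apply; rewrite /inV1; apply/orP; left.
  have -> : v = t by rewrite /tG hP E last_cat.
  exact: (end_tG canS z0 PS Pnc).
Qed.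

Lemma size_ctx u v Pre Post : pctx P u v Pre Post -> (1 < size P)%N.
Proof. by case=> -> _ _; rewrite size_cat /= !addnS. Qed.

Local Open Scope ring_scope.

Definition sig x := nb e S x s.
Definition tau x := nb e S x t.
Definition Wf x := \sum_(y | nb e S x y && (y \notin P)) bweight e S y.
Definition bf x := \sum_(y | balanced e S x y && inV1 e S y) bweight e S y.
Definition noother x := forall y, nb e S x y -> y \notin P -> incyc e S y.

Lemma sum_bool_pred1 (b : bool) (a : T) (F : T -> rat) :
  \sum_(y | b && (y == a)) F y = b%:R * F a.
Proof.
case: b; first by rewrite mul1r (eq_bigl (fun y => y == a)) ?big_pred1_eq.
by rewrite mul0r big_pred0.
Qed.

Lemma sum_st x (F : T -> rat) : (1 < size P)%N ->
  \sum_(y | nb e S x y && (y \in P)) F y = (sig x)%:R * F s + (tau x)%:R * F t.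
Proof.
move=> sz; have st := sG_tG canS z0 PS sz.
rewrite (bigID (pred1 s)) /= [X in _ + X](bigID (pred1 t)) /=.
rewrite [X in _ + (_ + X)]big1; last first.
  move=> y /andP[/andP[/andP[nxy yP] ys] yt].
  have [_ _ y1] := nbE' nxy.
  by case: (V1inP' canS z0 PS Pnc yP y1) => ey; [rewrite ey eqxx in ys | rewrite ey eqxx in yt].
rewrite addr0.
have e1 : \sum_(i | nb e S x i && (i \in P) && (i == s)) F i = (sig x)%:R * F s.
  rewrite -sum_bool_pred1; apply: eq_bigl => y /=; rewrite /sig.
  case: (eqVneq y s) => [->|_]; rewrite ?andbT ?andbF //.
  by rewrite (sG_in canS z0 PS) andbT.
have e2 : \sum_(i | nb e S x i && (i \in P) && (i != s) && (i == t)) F i = (tau x)%:R * F t.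
  rewrite -sum_bool_pred1; apply: eq_bigl => y /=; rewrite /tau.
  case: (eqVneq y t) => [->|_]; rewrite ?andbT ?andbF //.
  by rewrite (tG_in canS z0 PS) (eq_sym t) st !andbT.
by rewrite e1 e2.
Qed.


Lemma posW x : 0 < Wf x -> exists c, [&& nb e S x c, c \notin P & bweight e S c != 0].
Proof.
case: (pickP (fun c => [&& nb e S x c, c \notin P & bweight e S c != 0])) => [c hc|h0].
  by exists c.
rewrite /Wf big1 ?ltxx // => y /andP[nxy yP].
by have := h0 y; rewrite /= nxy yP /= => /negbFE /eqP.
Qed.

Lemma cyc_pair u v Pre Post : pctx P u v Pre Post -> noother u -> noother v ->
  0 < Wf u -> 0 < Wf v -> Wf u + Wf v <= 1.
Proof.
move=> cx nou nov /posW [c /and3P[nuc cP bc]] /posW [c' /and3P[nvc c'P bc']].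
have ic := nou c nuc cP.
have [C CS cC] := pp_cover c ppS.
have cycC : is_cycle_comp e C by rewrite -(incyc_comp ppS CS cC).
have [r [pr cr]] := cyc_span cycC.
have uC := comp_uniq1 uf CS.
have ur : uniq r by rewrite (perm_uniq pr).
have s6 : (size C <= 6)%N.
  by move: bc; rewrite (bw_cyc canS CS cC cycC); case: ifP => // _; rewrite eqxx.
have hA := fun c0 w nuc0 c0C =>
  @wCA _ e S esy canS P z0 PS Pnc u v Pre Post c0 C r w cx nuc0 CS c0C cycC pr cr.
have c'C : c' \in C by case: (hA c c' nuc cC nvc) => _ _ h _ _; exact: h c'P.
have hB := fun w => @wCB _ e S esy canS P z0 PS Pnc u v Pre Post c' C r w cx nvc CS c'C cycC pr cr.
set Du := [set y | nb e S u y && (y \notin P)].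
set Dv := [set y | nb e S v y && (y \notin P)].
have DuC : forall y, y \in Du -> y \in C.
  by move=> y; rewrite inE => /andP[nuy yP]; case: (hB y nuy) => _ _ h _ _; exact: h yP.
have DvC : forall y, y \in Dv -> y \in C.
  by move=> y; rewrite inE => /andP[nvy yP]; case: (hA c y nuc cC nvy) => _ _ h _ _; exact: h yP.
have WE : forall x (D : {set T}), D = [set y | nb e S x y && (y \notin P)] ->
    (forall y, y \in D -> y \in C) -> Wf x = (size C)%:R^-1 * #|D|%:R.
  move=> x D eD DC.
  rewrite /Wf (eq_bigr (fun _ => (size C)%:R^-1)); last first.
    move=> y hy; have yD : y \in D by rewrite eD inE.
    by rewrite (bw_cyc canS CS (DC y yD) cycC) s6.
  rewrite (eq_bigl (fun y => y \in D)); last by move=> y; rewrite eD inE.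
  by rewrite sumr_const mulr_natr.
rewrite (WE u Du (erefl _) DuC) (WE v Dv (erefl _) DvC) -mulrDr -natrD.
have nxinj : injective (next r) := can_inj (prev_next ur).
set Nv := [set next r y | y in Dv].
have cN : #|Nv| = #|Dv| := card_imset _ nxinj.
have disj : Du :&: Nv = set0.
  apply/setP => z; rewrite inE [z \in set0]inE; apply/negP => /andP[zu /imsetP [y yv ez]].
  have zC := DuC z zu.
  move: zu; rewrite inE => /andP[nuz _].
  move: yv; rewrite inE => /andP[nvy _].
  case: (hA z y nuz zC nvy) => _ _ _ h _.
  by move: h; rewrite ez (prev_next ur) eqxx.
have sub : Du :|: Nv \subset [set y | y \in C].
  apply/subsetP => z /setUP [zu | /imsetP[y yv ->]]; rewrite inE.
    exact: DuC.
  by rewrite -(perm_mem pr) mem_next (perm_mem pr) DvC.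
have cC' : #|[set y | y \in C]| = size C by rewrite cardsE; apply/card_uniqP.
have h := cardsUI Du Nv; rewrite disj cards0 addn0 cN in h.
have hle := subset_leq_card sub; rewrite h cC' in hle.
have szC : (0 < size C)%N by case/andP: cycC => h3 _; apply: leq_trans h3.
by rewrite mulrC ler_pdivrMr ?ltr0n // mul1r ler_nat.
Qed.

Lemma pairRc u v Pre Post : pctx P u v Pre Post -> inV2 e S u -> inV2 e S v ->
  noother u -> noother v -> Rc sig tau Wf u v.
Proof.
move=> cx u2 v2 nou nov.
have st := sG_tG canS z0 PS (size_ctx cx).
apply/and3P; split.
- apply/implyP => tu.
  have hv := fun w => @wTA _ e S esy canS P z0 PS Pnc u v Pre Post w cx tu.
  have [w0 nw0] := nonempty v2.
  have tv : tau v by rewrite /tau -(hv w0 nw0).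
  apply/and3P; split => //.
  + by apply/negP => sv; have := hv _ sv; apply/eqP.
  + apply/eqP; rewrite /Wf big1 // => y /andP[nvy yP].
    by move: yP; rewrite (hv y nvy) (tG_in canS z0 PS).
- apply/implyP => sv.
  have hu := fun w => @wSB _ e S esy canS P z0 PS Pnc u v Pre Post w cx sv.
  have [w0 nw0] := nonempty u2.
  have su : sig u by rewrite /sig -(hu w0 nw0).
  apply/and3P; split => //.
  + by apply/negP => tu; have := hu _ tu => /eqP; rewrite eq_sym (negbTE st).
  + apply/eqP; rewrite /Wf big1 // => y /andP[nuy yP].
    by move: yP; rewrite (hu y nuy) (sG_in canS z0 PS).
- by apply/implyP => wu; apply/implyP => wv; exact: (cyc_pair cx nou nov wu wv).
Qed.

Lemma Vok_x x : x \in P -> inV2 e S x -> noother x -> (1 < size P)%N ->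
  Vok sig tau Wf bf x.
Proof.
move=> xP x2 nox sz.
have bfE : bf x = \sum_(y | nb e S x y) bweight e S y.
  by apply: eq_bigl => y; rewrite balE.
apply/and3P; split.
- apply/eqP; rewrite bfE (bigID (fun y => y \in P)) /= (sum_st _ _ sz).
  rewrite (bw_end (end_sG canS z0 PS Pnc)) (bw_end (end_tG canS z0 PS Pnc)).
  by rewrite /Wf; congr (_ + _); rewrite mulrC [X in _ + X]mulrC.
- by apply: sumr_ge0 => y _; exact: bw_ge0.
- have h1 : 3%:R * Wf x <= \sum_(y | nb e S x y && (y \notin P)) (1 : rat).
    rewrite /Wf mulr_sumr; apply: ler_sum => y /andP[nxy yP].
    exact: (bw_cyc_le canS (nox y nxy yP)).
  have h2 := sum_st x (fun _ => 1 : rat) sz.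
  have h3 : \sum_(y | nb e S x y) (1 : rat) = #|[set y | nb e S x y]|%:R.
    rewrite (eq_bigl (fun y => y \in [set y | nb e S x y])); last by move=> y; rewrite inE.
    by rewrite sumr_const.
  have h4 := deg4 esy canS PS Pnc reg xP x2.
  have h5 : (#|[set y | nb e S x y]|%:R : rat) <= 4%:R by rewrite ler_nat.
  have h6 : (#|[set y | nb e S x y]|%:R : rat) =
     \sum_(y | nb e S x y && (y \in P)) (1 : rat) + \sum_(y | nb e S x y && (y \notin P)) (1 : rat).
    by rewrite -h3 (bigID (fun y => y \in P)).
  rewrite /= !mulr1 in h2; lra.
Qed.


Lemma good_of y z : (forall w, nb e S z w -> w = y) -> nb e S z y ->
  [forall w, nb e S z w == (w == y)].
Proof.
move=> h hy; apply/forallP => w; apply/eqP.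
by apply/idP/eqP => [/h|->].
Qed.

Lemma pair_good u v Pre Post y : pctx P u v Pre Post -> inV2 e S u -> inV2 e S v ->
  y \notin P -> ~~ incyc e S y -> (nb e S u y || nb e S v y) ->
  [forall w, nb e S u w == (w == y)] && [forall w, nb e S v w == (w == y)].
Proof.
move=> cx u2 v2 yP iy /orP[nuy|nvy].
- have hv := fun w => @wOA _ e S esy canS P z0 PS Pnc u v Pre Post y w cx nuy yP iy.
  have [w0 nw0] := nonempty v2.
  have nvy : nb e S v y by rewrite -(hv w0 nw0).
  have hu := fun w => @wOB _ e S esy canS P z0 PS Pnc u v Pre Post y w cx nvy yP iy.
  by rewrite (good_of hu nuy) (good_of hv nvy).
- have hu := fun w => @wOB _ e S esy canS P z0 PS Pnc u v Pre Post y w cx nvy yP iy.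
  have [w0 nw0] := nonempty u2.
  have nuy : nb e S u y by rewrite -(hu w0 nw0).
  have hv := fun w => @wOA _ e S esy canS P z0 PS Pnc u v Pre Post y w cx nuy yP iy.
  by rewrite (good_of hu nuy) (good_of hv nvy).
Qed.

Lemma in_pair (l : seq T) x : (2 <= size l)%N -> x \in l ->
  exists X1 X2 u v, l = X1 ++ u :: v :: X2 /\ (x = u \/ x = v).
Proof.
move=> s2 xl; have [p1 [p2 El]] := split_mem xl.
case: p2 El => [|v p2] El.
  case/lastP: p1 El => [|p1 u] El; first by rewrite El in s2.
  by exists p1, [::], u, x; rewrite El cat_rcons; split; [|right].
by exists p1, p2, x, v; split; [|left].
Qed.

Lemma sum_const_seq (l : seq T) (c : rat) : \sum_(z <- l) c = c * (size l)%:R.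
Proof.
elim: l => [|z l IH]; first by rewrite big_nil mulr0.
by rewrite big_cons IH /= mulrS; ring.
Qed.

Theorem main_infix X : infix X P -> (2 <= size X)%N -> all (inV2 e S) X ->
  bval e S X <= 2%:R / 3%:R * ((size X)%:R + 2%:R).
Proof.
move=> iX s2 aX.
have [L [M hP]] := infixP iX.
have XP : {subset X <= P} by move=> x xX; rewrite hP !mem_cat xX orbT.
have inX2 : forall x, x \in X -> inV2 e S x by move=> x; move/allP: aX; apply.
have ctx : forall X1 X2 u v, X = X1 ++ u :: v :: X2 -> pctx P u v (L ++ X1) (X2 ++ M).
  move=> X1 X2 u v EX; apply: mk_ctx.
  - by rewrite hP EX.
  - by apply: inX2; rewrite EX mem_cat mem_head orbT.
  - by apply: inX2; rewrite EX mem_cat !inE eqxx !orbT.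
have szP : (1 < size P)%N.
  have [X1 [X2 [u [v [EX _]]]]] : exists X1 X2 u v, X = X1 ++ u :: v :: X2 /\ True.
    case: X s2 {iX hP XP inX2 ctx aX} => [//|a [//|b l]] _.
    by exists [::], l, a, b.
  exact: (size_ctx (ctx _ _ _ _ EX)).
have uvX : forall X1 X2 u v, X = X1 ++ u :: v :: X2 -> inV2 e S u /\ inV2 e S v.
  move=> X1 X2 u v EX; split; apply: inX2; rewrite EX mem_cat !inE eqxx ?orbT //.
case hasO: (has (fun x => [exists y, [&& nb e S x y, y \notin P & ~~ incyc e S y]]) X).
- case/hasP: hasO => x xX /existsP [y /and3P[nxy yP iy]].
  set good := fun z => [forall w, nb e S z w == (w == y)].
  have pg : forall X1 X2 u v, X = X1 ++ u :: v :: X2 -> good u == good v.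
    move=> X1 X2 u v EX; have [u2 v2] := uvX _ _ _ _ EX.
    have pgd := pair_good (ctx _ _ _ _ EX) u2 v2 yP iy.
    rewrite /good; apply/eqP; apply/idP/idP => g.
      have nuy : nb e S u y by move/forallP: g => /(_ y); rewrite eqxx => /eqP.
      by case/andP: (pgd (introT orP (or_introl nuy))).
    have nvy : nb e S v y by move/forallP: g => /(_ y); rewrite eqxx => /eqP.
    by case/andP: (pgd (introT orP (or_intror nvy))).
  have gx : good x.
    have [X1 [X2 [u [v [EX hx]]]]] := in_pair s2 xX.
    have [u2 v2] := uvX _ _ _ _ EX.
    have pgd := pair_good (ctx _ _ _ _ EX) u2 v2 yP iy.
    rewrite /good; case: hx => ex; rewrite ex in nxy *.
      by case/andP: (pgd (introT orP (or_introl nxy))).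
    by case/andP: (pgd (introT orP (or_intror nxy))).
  case: X s2 aX iX hP XP inX2 ctx uvX pg xX {szP} => [//|x0 X'] s2 aX iX hP XP inX2 ctx uvX pg xX.
  have pX : path (fun a b => good a == good b) x0 X' by apply: path_pairs.
  have allg : forall z, z \in x0 :: X' -> good z.
    by move=> z zX; rewrite (path_eq_all pX zX) -(path_eq_all pX xX).
  have endy : endv e S y.
    by have [_ _ y1] := nbE' nxy; move: y1; rewrite /inV1 (negbTE iy) orbF.
  rewrite /bval big_seq (eq_bigr (fun _ => 2%:R / 3%:R)); last first.
    move=> z zX; rewrite (eq_bigl (fun w => w == y)); last first.
      move=> w; rewrite balE; last exact: inX2.
      by move/forallP: (allg z zX) => /(_ w) /eqP.
    by rewrite big_pred1_eq (bw_end endy).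
  rewrite -big_seq sum_const_seq.
  have : (0 : rat) <= 2%:R / 3%:R by apply: divr_ge0; apply: ler0n.
  lra.
- have nox : forall x, x \in X -> noother x.
    move=> x xX y nxy yP; apply/negPn/negP => iy.
    move/negbT/hasPn: hasO => /(_ x xX) /negP; apply; apply/existsP; exists y.
    by rewrite nxy yP iy.
  have nou : forall X1 X2 u v, X = X1 ++ u :: v :: X2 -> noother u /\ noother v.
    move=> X1 X2 u v EX; split; apply: nox; rewrite EX mem_cat !inE eqxx ?orbT //.
  case: X s2 aX iX hP XP inX2 ctx uvX nox nou hasO => [//|x0 X'] s2 aX iX hP XP inX2 ctx uvX nox nou _.
  have V : all (Vok sig tau Wf bf) (x0 :: X').
    apply/allP => x xX; apply: Vok_x => //; [exact: XP | exact: inX2 | exact: nox].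
  have pR : path (Rc sig tau Wf) x0 X'.
    apply: path_pairs => X1 X2 u v EX.
    have [u2 v2] := uvX _ _ _ _ EX; have [nu nv] := nou _ _ _ _ EX.
    exact: (pairRc (ctx _ _ _ _ EX) u2 v2 nu nv).
  have := abstract_bound V pR.
  have -> : size (x0 :: X') = (size X').+1 by [].
  rewrite /bval -/(bf _); move=> h; apply: (le_trans h); rewrite mulrDr; lra.
Qed.

End Main2.

Unset Implicit Arguments.
Local Open Scope ring_scope.

Theorem lemma8 (T : finType) (e : rel T) (S : seq (seq T)) (P X : seq T) :
  symmetric e -> irreflexive e ->
  (forall v : T, #|[set w | e v w]| = 6%N) ->
  canonical_pp e S ->
  P \in S -> ~~ is_cycle_comp e P ->
  infix X P || infix (rev X) P ->
  (2 <= size X)%N ->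
  all (inV2b e S) X ->
  (forall x y, x \in X -> free_edge e S x y -> ~~ dangerous e S y) ->
  bval e S X <= 2%:R / 3%:R * ((size X)%:R + 2%:R).
Proof.
move=> esy eirr reg canS PS Pnc iX s2 aX _.
have aX2 : forall Y, all (inV2b e S) Y -> all (inV2 e S) Y.
  by move=> Y /allP h; apply/allP => x /h /andP[].
case: X iX s2 aX => [//|x0 X'] iX s2 aX.
case/orP: iX => iX.
  exact: (@main_infix T e S esy canS reg P x0 PS Pnc _ iX s2 (aX2 _ aX)).
have := @main_infix T e S esy canS reg P x0 PS Pnc _ iX.
rewrite size_rev => /(_ s2); rewrite all_rev => /(_ (aX2 _ aX)).
by rewrite /bval big_rev.
Qed.
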